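(* Let $\mathcal{H}$ be a real Hilbert space, $A:\mathcal{H}\rightrightarrows\mathcal{H}$ maximal monotone with $A^{-1}(0)\neq\emptyset$, $\theta>0$, $p\geq1$ an integer, and let $(x,\lambda):[0,+\infty)\to\mathcal{H}\times(0,+\infty)$ be a global solution of \[ \dot{x}(t)+x(t)-(I+\lambda(t)A)^{-1}x(t)=0,\qquad \lambda(t)\,\|(I+\lambda(t)A)^{-1}x(t)-x(t)\|^{p-1}=\theta, \] with $x(0)\in\{x:0\notin Ax\}$. Fix $z\in A^{-1}(0)$ and let $\mathcal{E}(t)=\frac12\|x(t)-z\|^2$. Then \[ \frac{d\mathcal{E}(t)}{dt}\leq-\|x(t)-(I+\lambda(t)A)^{-1}x(t)\|^2 . \]
   Context: $(I+\lambda A)^{-1}$ is the resolvent of $A$ of index $\lambda>0$; $A^{-1}(0)=\{x:0\in Ax\}$. *)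

(* Defs.v *)
From HB Require Import structures.
From mathcomp Require Import all_boot all_order all_algebra.
From mathcomp Require Import all_classical all_reals all_analysis.
Set Implicit Arguments. Unset Strict Implicit. Unset Printing Implicit Defensive.
Import Order.TTheory GRing.Theory Num.Theory.
Import numFieldNormedType.Exports.
Local Open Scope classical_set_scope.
Local Open Scope ring_scope.

Definition is_inner_product (R : realType) (V : completeNormedModType R)
  (ip : V -> V -> R) : Prop :=
  [/\ forall x y, ip x y = ip y x,
      forall a x y z, ip (a *: x + y) z = a * ip x z + ip y z
    & forall x, ip x x = `|x| ^+ 2].

(* Set-valued operators A : V ⇉ V are represented by their values A x : set V. *)
Definition monotone_op (R : realType) (V : completeNormedModType R)
  (ip : V -> V -> R) (A : V -> set V) : Prop :=
  forall x y u v, A x u -> A y v -> 0 <= ip (x - y) (u - v).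

Definition maximal_monotone (R : realType) (V : completeNormedModType R)
  (ip : V -> V -> R) (A : V -> set V) : Prop :=
  monotone_op ip A /\
  forall B : V -> set V, monotone_op ip B -> (forall x, A x `<=` B x) -> B = A.

Definition zeros (R : realType) (V : completeNormedModType R)
  (A : V -> set V) : set V := [set x | A x 0].

(* Resolvent (I + lam A)^{-1} x : the (unique, for maximal monotone A and
   lam > 0) y with x \in y + lam A y. *)
Definition resolvent (R : realType) (V : completeNormedModType R)
  (A : V -> set V) (lam : R) (x : V) : V :=
  xget 0 [set y | exists2 u, A y u & x = y + lam *: u].

(* Main.v *)
Require Import Defs.
From HB Require Import structures.
From mathcomp Require Import all_boot all_order all_algebra.
From mathcomp Require Import all_classical all_reals all_analysis.
From mathcomp Require Import ring lra.
Import Order.TTheory GRing.Theory Num.Theory.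
Import numFieldNormedType.Exports.
Local Open Scope classical_set_scope.
Local Open Scope ring_scope.


Lemma ip_lin {R : realType} {V : completeNormedModType R} {ip : V -> V -> R} :
  is_inner_product ip ->
  [/\ (forall y, ip 0 y = 0), (forall x y z, ip (x + y) z = ip x z + ip y z),
      (forall a x z, ip (a *: x) z = a * ip x z),
      (forall x y, ip x (- y) = - ip x y) &
      (forall x y z, ip x (y + z) = ip x y + ip x z)].
Proof.
case=> Hs Hl Hn.
have H0 : forall y, ip 0 y = 0.
  move=> y; have := Hl 1 0 0 y; rewrite scale1r addr0 => /eqP.
  by rewrite mul1r -subr_eq subrr eq_sym => /eqP.
have HD : forall x y z, ip (x + y) z = ip x z + ip y z.
  by move=> x y z; rewrite -[x in LHS]scale1r Hl mul1r.
have HZ : forall a x z, ip (a *: x) z = a * ip x z.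
  by move=> a x z; rewrite -[_ *: _]addr0 Hl H0 addr0.
split=> //.
- by move=> x y; rewrite Hs -scaleN1r HZ Hs mulN1r.
- by move=> x y z; rewrite Hs HD !(Hs x).
Qed.



Lemma ipDl {R : realType} {V : completeNormedModType R} {ip : V -> V -> R} (Hip : is_inner_product ip) x y z : ip (x + y) z = ip x z + ip y z.
Proof. by have [] := ip_lin Hip. Qed.
Lemma ipZl {R : realType} {V : completeNormedModType R} {ip : V -> V -> R} (Hip : is_inner_product ip) (a : R) x z : ip (a *: x) z = a * ip x z.
Proof. by have [] := ip_lin Hip. Qed.
Lemma ipDr {R : realType} {V : completeNormedModType R} {ip : V -> V -> R} (Hip : is_inner_product ip) x y z : ip x (y + z) = ip x y + ip x z.
Proof. by have [] := ip_lin Hip. Qed.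
Lemma ipNr {R : realType} {V : completeNormedModType R} {ip : V -> V -> R} (Hip : is_inner_product ip) x y : ip x (- y) = - ip x y.
Proof. by have [] := ip_lin Hip. Qed.
Lemma ipC {R : realType} {V : completeNormedModType R} {ip : V -> V -> R} (Hip : is_inner_product ip) x y : ip x y = ip y x.
Proof. by case: Hip. Qed.
Lemma ipnn {R : realType} {V : completeNormedModType R} {ip : V -> V -> R} (Hip : is_inner_product ip) x : ip x x = `|x| ^+ 2.
Proof. by case: Hip. Qed.
Lemma ipNl {R : realType} {V : completeNormedModType R} {ip : V -> V -> R} (Hip : is_inner_product ip) x y : ip (- x) y = - ip x y.
Proof. by rewrite (ipC Hip) (ipNr Hip) (ipC Hip). Qed.
Lemma ipZr {R : realType} {V : completeNormedModType R} {ip : V -> V -> R} (Hip : is_inner_product ip) (a : R) x z : ip x (a *: z) = a * ip x z.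
Proof. by rewrite (ipC Hip) (ipZl Hip) (ipC Hip). Qed.
Lemma ipBl {R : realType} {V : completeNormedModType R} {ip : V -> V -> R} (Hip : is_inner_product ip) x y z : ip (x - y) z = ip x z - ip y z.
Proof. by rewrite (ipDl Hip) (ipNl Hip). Qed.
Lemma ipBr {R : realType} {V : completeNormedModType R} {ip : V -> V -> R} (Hip : is_inner_product ip) x y z : ip x (y - z) = ip x y - ip x z.
Proof. by rewrite (ipDr Hip) (ipNr Hip). Qed.
Lemma ipBB {R : realType} {V : completeNormedModType R} {ip : V -> V -> R} (Hip : is_inner_product ip) a b c d : ip (a - b) (c - d) = ip a c - ip a d - ip b c + ip b d.
Proof. rewrite (ipBl Hip) !(ipBr Hip); lra. Qed.
Lemma normD2 {R : realType} {V : completeNormedModType R} {ip : V -> V -> R} (Hip : is_inner_product ip) x y : `|x + y| ^+ 2 = `|x| ^+ 2 + 2 * ip x y + `|y| ^+ 2.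
Proof. rewrite -!(ipnn Hip) (ipDl Hip) !(ipDr Hip) ((ipC Hip) y x); lra. Qed.
Lemma normB2 {R : realType} {V : completeNormedModType R} {ip : V -> V -> R} (Hip : is_inner_product ip) x y : `|x - y| ^+ 2 = `|x| ^+ 2 - 2 * ip x y + `|y| ^+ 2.
Proof. rewrite -!(ipnn Hip) (ipBl Hip) !(ipBr Hip) ((ipC Hip) y x); lra. Qed.
Lemma polar {R : realType} {V : completeNormedModType R} {ip : V -> V -> R} (Hip : is_inner_product ip) x y : ip x y = (`|x + y| ^+ 2 - `|x - y| ^+ 2) / 4.
Proof. rewrite (normD2 Hip) (normB2 Hip); lra. Qed.
Lemma normZ2 {R : realType} {V : completeNormedModType R} {ip : V -> V -> R} (Hip : is_inner_product ip) (a : R) (x : V) : `|a *: x| ^+ 2 = a ^+ 2 * `|x| ^+ 2.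
Proof. by rewrite normrZ exprMn real_normK ?num_real. Qed.
Lemma normDZ {R : realType} {V : completeNormedModType R} {ip : V -> V -> R} (Hip : is_inner_product ip) (x : V) (t : R) (w : V) : `|x + t *: w| ^+ 2 = `|x| ^+ 2 + 2 * t * ip x w + t ^+ 2 * `|w| ^+ 2.
Proof. rewrite (normD2 Hip) (normZ2 Hip) (ipZr Hip); lra. Qed.
Lemma normmid {R : realType} {V : completeNormedModType R} {ip : V -> V -> R} (Hip : is_inner_product ip) (x y : V) : `|2^-1 *: (x + y)| ^+ 2 = (`|x| ^+ 2 + `|y| ^+ 2) / 2 - `|x - y| ^+ 2 / 4.
Proof. rewrite (normZ2 Hip) (normD2 Hip) (normB2 Hip); by field. Qed.

Lemma cvg_sq {R : realType} {V : completeNormedModType R} (u : nat -> V) l c :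
  u @ \oo --> l -> (fun n => `|u n + c| ^+ 2) @ \oo --> `|l + c| ^+ 2.
Proof. move=> Lu.
have H : (fun n => `|u n + c|) @ \oo --> `|l + c|.
  by apply: cvg_norm; apply: cvgD => //; exact: cvg_cst.
by rewrite expr2; apply: (cvgM H H).
Qed.

Lemma cvg_sq0 {R : realType} {V : completeNormedModType R} (u : nat -> V) l :
  u @ \oo --> l -> (fun n => `|u n| ^+ 2) @ \oo --> `|l| ^+ 2.
Proof. move=> Lu.
have H : (fun n => `|u n|) @ \oo --> `|l| by apply: cvg_norm.
by rewrite expr2; apply: (cvgM H H).
Qed.

Lemma minty_abs {R : realType} {V : completeNormedModType R} {ip : V -> V -> R}
  (Hip : is_inner_product ip) (P : V -> V -> Prop) :
  (forall a b c d, P a b -> P c d -> 0 <= ip (a - c) (b - d)) ->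
  (forall y v, (forall a b, P a b -> 0 <= ip (y - a) (v - b)) -> P y v) ->
  (exists a b, P a b) -> exists y, P y (- y).
Proof.
move=> Hmono Hmax [a0 [b0 Pab0]].
pose phi y v a b := ip y b + ip a v - ip a b.
pose Fle y v c := forall a b, P a b -> phi y v a b <= c.
have L1 : forall y v c, Fle y v c -> ip y v <= c.
  move=> y v c Hf; rewrite leNgt; apply/negP => Hlt.
  have Pyv : P y v.
    apply: Hmax => a b Pab; have := Hf a b Pab; rewrite /phi (ipBB Hip) => ?; lra.
  by have := Hf y v Pyv; rewrite /phi; lra.
have Fp : forall a b, P a b -> Fle a b (ip a b).
  move=> a b Pab a' b' Pab'; have := Hmono _ _ _ _ Pab Pab'; rewrite /phi (ipBB Hip); lra.
pose Q y v c := Fle y v (c - (`|y| ^+ 2 + `|v| ^+ 2) / 2).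
pose S := [set c | exists y v, Q y v c].
have Q0 : forall y v c, Q y v c -> 0 <= c.
  move=> y v c /L1 H; have := normD2 Hip y v.
  have := exprn_ge0 2 (normr_ge0 (y + v)); lra.
have Qmono : forall y v c c', Q y v c -> c <= c' -> Q y v c'.
  move=> y v c c' HQ Hc a b Pab; have := HQ a b Pab; lra.
have S0 : S (ip a0 b0 + (`|a0| ^+ 2 + `|b0| ^+ 2) / 2).
  exists a0, b0 => a b Pab; have := Fp a0 b0 Pab0 a b Pab; lra.
have hinf : has_inf S.
  split; first by exists (ip a0 b0 + (`|a0| ^+ 2 + `|b0| ^+ 2) / 2).
  by exists 0 => c [y [v /Q0]].
set m := inf S.
have m0 : 0 <= m.
  apply: lb_le_inf; first by exists (ip a0 b0 + (`|a0| ^+ 2 + `|b0| ^+ 2) / 2).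
  by move=> c [y [v /Q0]].
have mle : forall y v c, Q y v c -> m <= c.
  by move=> y v c HQ; apply: (ge_inf hinf.2); exists y, v.
have Qmid : forall y1 v1 c1 y2 v2 c2, Q y1 v1 c1 -> Q y2 v2 c2 ->
    Q (2^-1 *: (y1 + y2)) (2^-1 *: (v1 + v2))
      ((c1 + c2) / 2 - (`|y1 - y2| ^+ 2 + `|v1 - v2| ^+ 2) / 8).
  move=> y1 v1 c1 y2 v2 c2 H1 H2 a b Pab.
  have := H1 a b Pab; have := H2 a b Pab.
  rewrite /phi (ipZl Hip) (ipZr Hip) (ipDl Hip) (ipDr Hip) !(normmid Hip); lra.
have Hseq : forall n : nat, exists yv : V * V, Q yv.1 yv.2 (m + n.+1%:R^-1).
  move=> n; have he : 0 < n.+1%:R^-1 :> R by rewrite invr_gt0 ltr0Sn.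
  have [c [y [v HQ]] Hc] := inf_adherent he hinf.
  exists (y, v); apply: Qmono HQ _; exact: ltW.
clearbody m.
case: (choice Hseq) => f Hf.
pose ys n := (f n).1; pose vs n := (f n).2.
have Hb : forall n k, `|ys n - ys k| ^+ 2 + `|vs n - vs k| ^+ 2
    <= 4 * (n.+1%:R^-1 + k.+1%:R^-1).
  move=> n k; have := mle _ _ _ (Qmid _ _ _ _ _ _ (Hf n) (Hf k)); rewrite /ys /vs. set e1 := n.+1%:R^-1. set e2 := k.+1%:R^-1. set D1 := `|_ - _| ^+ 2. set D2 := `|_ - _| ^+ 2. lra.
have Hcv : forall u : nat -> V,
    (forall n k, `|u n - u k| ^+ 2 <= 4 * (n.+1%:R^-1 + k.+1%:R^-1)) ->
    cvg (u @ \oo).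
  move=> u Hu; apply: cauchy_cvg; apply: cauchy_exP => eps eps0.
  have h8 : 0 <= 8 / eps ^+ 2 by rewrite divr_ge0 // exprn_ge0 // ltW.
  set N := Num.Def.archi_bound (8 / eps ^+ 2).
  have HN := archi_boundP h8; rewrite -/N in HN.
  have HN1 : 8 < N.+1%:R * eps ^+ 2.
    rewrite -ltr_pdivrMr ?exprn_gt0 //; apply: (lt_le_trans HN).
    by rewrite ler_nat.
  have HN2 : 8 * N.+1%:R^-1 < eps ^+ 2 by rewrite ltr_pdivrMr ?ltr0Sn // mulrC.
  exists (u N); exists N => // n /= HNn.
  rewrite -ball_normE /ball_ /=.
  have Hn : n.+1%:R^-1 <= N.+1%:R^-1 :> R.
    by rewrite lef_pV2 ?posrE ?ltr0Sn // ler_nat ltnS.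
  have := Hu N n; have := normr_ge0 (u N - u n); rewrite !expr2 in HN2 *.
  set e1 := N.+1%:R^-1 in HN2 Hn *; set e2 := n.+1%:R^-1 in Hn *.
  set d := `|_ - _|; move=> Hd Hdd; rewrite ltNge; apply/negP => He.
  have : eps * eps <= d * d by apply: ler_pM => //; apply: ltW.
  lra.
have cy : ys @ \oo --> lim (ys @ \oo).
  apply: Hcv => n k; have := Hb n k; have := exprn_ge0 2 (normr_ge0 (vs n - vs k)).
  set e1 := n.+1%:R^-1; set e2 := k.+1%:R^-1; lra.
have cv : vs @ \oo --> lim (vs @ \oo).
  apply: Hcv => n k; have := Hb n k; have := exprn_ge0 2 (normr_ge0 (ys n - ys k)).
  set e1 := n.+1%:R^-1; set e2 := k.+1%:R^-1; lra.
move: cy cv; set y0 := lim (ys @ \oo); set v0 := lim (vs @ \oo) => cy cv.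
have Qlim : Q y0 v0 m.
  move=> a b Pab.
  have Hg : (fun n => (`|ys n + b| ^+ 2 - `|ys n - b| ^+ 2) / 4
      + (`|vs n + a| ^+ 2 - `|vs n - a| ^+ 2) / 4 - ip a b
      + (`|ys n| ^+ 2 + `|vs n| ^+ 2) / 2 - harmonic n) @ \oo -->
      (`|y0 + b| ^+ 2 - `|y0 - b| ^+ 2) / 4
      + (`|v0 + a| ^+ 2 - `|v0 - a| ^+ 2) / 4 - ip a b
      + (`|y0| ^+ 2 + `|v0| ^+ 2) / 2 - 0.
    apply: cvgB; last exact: cvg_harmonic.
    apply: cvgD; last by apply: cvgMl; apply: cvgD; apply: cvg_sq0.
    apply: cvgB; last exact: cvg_cst.
    apply: cvgD; apply: cvgMl; apply: cvgB; apply: cvg_sq => //.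
  have := closed_cvg _ (@closed_le _ m) _ _ Hg.
  rewrite /phi (polar Hip y0 b) (ipC Hip a v0) (polar Hip v0 a) subr0 /=.
  move=> H; suff /H : \forall n \near \oo,
      (`|ys n + b| ^+ 2 - `|ys n - b| ^+ 2) / 4
      + (`|vs n + a| ^+ 2 - `|vs n - a| ^+ 2) / 4 - ip a b
      + (`|ys n| ^+ 2 + `|vs n| ^+ 2) / 2 - harmonic n <= m by lra.
  apply: nearW => n /=; have := Hf n a b Pab.
  rewrite /phi (polar Hip (f n).1 b) (ipC Hip a (f n).2) (polar Hip (f n).2 a).
  rewrite /ys /vs; set e := n.+1%:R^-1; lra.
have Var : forall a b, P a b ->
    m + (`|y0| ^+ 2 + `|v0| ^+ 2) / 2 <= ip a b + ip y0 a + ip v0 b.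
  move=> a b Pab; rewrite leNgt; apply/negP => Hlt.
  have [d dE] : exists d, d = m + (`|y0| ^+ 2 + `|v0| ^+ 2) / 2 - (ip a b + ip y0 a + ip v0 b)
    by eexists.
  have d0 : 0 < d by rewrite dE subr_gt0.
  have [M ME] : exists M, M = `|a - y0| ^+ 2 + `|b - v0| ^+ 2 by eexists.
  have M0 : 0 <= M by rewrite ME addr_ge0 // exprn_ge0.
  have Md0 : 0 < M + d by rewrite ltr_wpDl.
  have [t tE] : exists t, t = d / (M + d) by eexists.
  have t0 : 0 < t by rewrite tE divr_gt0.
  have htM : t * (M + d) = d by rewrite tE divfK // gt_eqF.
  have t1 : t <= 1.
    have : t * M >= 0 by rewrite mulr_ge0 // ltW.
    have : t * d <= d -> t <= 1.
      by move=> H; rewrite -(ler_pM2r d0) mul1r.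
    move=> H H'; apply: H; lra.
  have HQt : Q (y0 + t *: (a - y0)) (v0 + t *: (b - v0))
      ((1 - t) * (m - (`|y0| ^+ 2 + `|v0| ^+ 2) / 2) + t * ip a b +
       (`|y0 + t *: (a - y0)| ^+ 2 + `|v0 + t *: (b - v0)| ^+ 2) / 2).
    move=> a' b' Pab'; have h1 := Qlim a' b' Pab'; have h2 := Fp a b Pab a' b' Pab'.
    have t1' : 0 <= 1 - t by rewrite subr_ge0.
    have h1' := ler_wpM2l t1' h1.
    have h2' := ler_wpM2l (ltW t0) h2.
    rewrite /phi in h1' h2' *.
    rewrite (ipDl Hip) (ipZl Hip) (ipBl Hip) (ipDr Hip) (ipZr Hip) (ipBr Hip).
    lra.
  have := mle _ _ _ HQt; rewrite !(normDZ Hip) !(ipBr Hip) !(ipnn Hip).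
  have e1 : t * t * M = t * d - t * t * d.
    by rewrite -{1}htM; ring.
  have e2 : 0 < t * d by rewrite mulr_gt0.
  have e3 : 0 <= t * t * d by rewrite !mulr_ge0 // ltW.
  rewrite ME in e1; rewrite dE in e1 e2 e3; rewrite !expr2 in e1 *.
  lra.
have Fneg : Fle (- v0) (- y0) (- (m + (`|y0| ^+ 2 + `|v0| ^+ 2) / 2)).
  move=> a b Pab; have := Var a b Pab.
  rewrite /phi (ipNl Hip) (ipNr Hip) (ipC Hip a y0); lra.
have := L1 _ _ _ Fneg; rewrite (ipNl Hip) (ipNr Hip) opprK (ipC Hip v0 y0) => Hyv.
have Hs := normD2 Hip y0 v0; have nn := exprn_ge0 2 (normr_ge0 (y0 + v0)).
have Hz : `|y0 + v0| ^+ 2 = 0 by lra.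
have v0E : v0 = - y0.
  apply/eqP; rewrite -addr_eq0 addrC -normr_eq0; apply/eqP.
  by move/eqP: Hz; rewrite expf_eq0 /= => /eqP.
exists y0; rewrite -v0E; apply: Hmax => a b Pab; rewrite (ipBB Hip).
have := Qlim a b Pab; rewrite /phi; lra.
Qed.


Lemma derive_half_sq {R : realType} {V : completeNormedModType R} {ip : V -> V -> R}
  (Hip : is_inner_product ip) (x : R -> V) (z : V) (t : R) :
  derivable x t 1 ->
  'D_1 (fun s => 2^-1 * `|x s - z| ^+ 2) t = ip ('D_1 x t) (x t - z).
Proof.
move=> Hd.
pose q h := h^-1 *: ((x \o shift t) (h *: 1) - x t).
have Hq : q h @[h --> 0^'] --> 'D_1 x t := Hd.
set u := x t - z.
rewrite /derive; apply: cvg_lim => //.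
have Hg : (fun h => (`|q h + u| ^+ 2 - `|q h - u| ^+ 2) / 4 + 2^-1 * h * `|q h| ^+ 2)
   @ 0^' --> (`|'D_1 x t + u| ^+ 2 - `|'D_1 x t - u| ^+ 2) / 4 + 2^-1 * 0 * `|'D_1 x t| ^+ 2.
  have Hn : forall c, (fun h => `|q h + c| ^+ 2) @ 0^' --> `|'D_1 x t + c| ^+ 2.
    move=> c; have H : (fun h => `|q h + c|) @ 0^' --> `|'D_1 x t + c|.
      by apply: cvg_norm; apply: cvgD => //; exact: cvg_cst.
    by rewrite expr2; apply: (cvgM H H).
  apply: cvgD.
    by apply: cvgMl; apply: cvgB; [exact: Hn | exact: Hn].
  apply: cvgM; first by apply: cvgMr; exact: cvg_within.
  have H : (fun h => `|q h|) @ 0^' --> `|'D_1 x t| by apply: cvg_norm.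
  by rewrite expr2; apply: (cvgM H H).
rewrite mulr0 mul0r addr0 -(polar Hip) in Hg.
apply: cvg_trans Hg; apply: near_eq_cvg; near=> h.
have h0 : h != 0 by near: h; exact: nbhs_dnbhs_neq.
rewrite -(polar Hip) /q /= .
set w := x (h *: 1 + t) - x t.
have -> : x (h *: 1 + t) - z = u + w by rewrite /w /u [RHS]addrC -[RHS]addrA addKr.
rewrite (normD2 Hip) (ipZl Hip) normrZ exprMn (ipC Hip w u).
rewrite /GRing.scale /=.
have ha : `|h^-1| ^+ 2 = h^-1 * h^-1 by rewrite real_normK ?num_real // expr2.
rewrite ha; field.
Unshelve. all: by end_near.
Qed.


Lemma resolvent_spec {R : realType} {V : completeNormedModType R} {ip : V -> V -> R}
  (Hip : is_inner_product ip) (A : V -> set V) (lam : R) (x : V) :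
  maximal_monotone ip A -> zeros A !=set0 -> 0 < lam ->
  exists2 u, A (resolvent A lam x) u & x = resolvent A lam x + lam *: u.
Proof.
move=> [Hmon Hmax] [z0 Hz0] lam0.
rewrite /resolvent.
set S := [set y | exists2 u, A y u & x = y + lam *: u].
suff : S (xget 0 S) by [].
apply: xgetPex.
have lamV : lam^-1 * lam = 1 by rewrite mulVf // gt_eqF.
have lamV' : lam * lam^-1 = 1 by rewrite mulfV // gt_eqF.
pose P a b := A a (lam^-1 *: (b + x)).
have Hs : forall b d, lam^-1 *: (b + x) - lam^-1 *: (d + x) = lam^-1 *: (b - d).
  by move=> b d; rewrite -scalerBr opprD addrACA subrr addr0.
have [y Py] : exists y, P y (- y).
  apply: (minty_abs Hip).
  - move=> a b c d Pab Pcd; have := Hmon _ _ _ _ Pab Pcd.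
    by rewrite Hs (ipZr Hip) pmulr_rge0 // invr_gt0.
  - move=> y v H; rewrite /P.
    set u' := lam^-1 *: (v + x).
    have key : forall a u, A a u -> 0 <= ip (y - a) (u' - u).
      move=> a u Hau.
      have Pa : P a (lam *: u - x) by rewrite /P subrK scalerA lamV scale1r.
      have := H _ _ Pa.
      have -> : v - (lam *: u - x) = lam *: (u' - u).
        by rewrite scalerBr /u' scalerA lamV' scale1r opprB addrA.
      by rewrite (ipZr Hip) pmulr_rge0.
    pose B := fun a => [set u | A a u \/ (a = y /\ u = u')].
    have monoB : monotone_op ip B.
      move=> a c u w [Hau|[-> ->]] [Hcw|[-> ->]].
      + exact: Hmon.
      + by rewrite -(opprB y a) -(opprB u' u) (ipNl Hip) (ipNr Hip) opprK; apply: key.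
      + exact: key.
      + by rewrite !subrr (ipnn Hip) normr0 expr0n.
    have BA := Hmax B monoB (fun a u Hau => or_introl Hau).
    by rewrite -BA /B /=; right.
  - exists z0, (- x); by rewrite /P addNr scaler0.
exists y; exists (lam^-1 *: (- y + x)) => //.
by rewrite scalerA lamV' scale1r addNKr.
Qed.

Theorem lemma3p1 (R : realType) (V : completeNormedModType R)
  (ip : V -> V -> R) (A : V -> set V) (theta : R) (p : nat)
  (x : R -> V) (lam : R -> R) (z : V) :
  is_inner_product ip ->
  maximal_monotone ip A ->
  zeros A !=set0 ->
  0 < theta ->
  (1 <= p)%N ->
  (forall t, 0 <= t -> 0 < lam t) ->
  (forall t, 0 < t -> derivable x t 1) ->
  (forall t, 0 < t ->
     'D_1 x t + x t - resolvent A (lam t) (x t) = 0) ->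
  (forall t, 0 <= t ->
     lam t * `|resolvent A (lam t) (x t) - x t| ^+ p.-1 = theta) ->
  ~ zeros A (x 0) ->
  zeros A z ->
  forall t, 0 < t ->
    'D_1 (fun s => 2^-1 * `|x s - z| ^+ 2) t
      <= - `|x t - resolvent A (lam t) (x t)| ^+ 2.
Proof.
move=> Hip Hmm Hne _ _ Hlam Hder Heq _ _ Hz t t0.
rewrite (derive_half_sq Hip x z t (Hder t t0)).
have lam0 := Hlam t (ltW t0).
have [u Hu xE] := resolvent_spec Hip A (lam t) (x t) Hmm Hne lam0.
set J := resolvent A (lam t) (x t) in Hu xE *.
have -> : 'D_1 x t = J - x t.
  by apply/eqP; rewrite -subr_eq0 opprB addrA; apply/eqP; exact: Heq.
have hm := Hmm.1 _ _ _ _ Hu Hz.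
rewrite subr0 in hm.
have -> : x t - z = (x t - J) + (J - z) by rewrite addrA subrK.
rewrite (ipDr Hip) -(opprB (x t) J) (ipNl Hip) (ipnn Hip).
have -> : x t - J = lam t *: u by rewrite xE addrC addKr.
rewrite (ipNl Hip) (ipZl Hip) (ipC Hip u).
have : 0 <= lam t * ip (J - z) u by rewrite mulr_ge0 // ltW.
lra.
Qed.
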